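(* Let $\lambda_0,\lambda_1,c_1\ge0$. For $E\in\mathbb{R}$ let $$A_1(E)=\begin{bmatrix}E&-1\\1&0\end{bmatrix}\begin{bmatrix}E-c_1&-1\\1&0\end{bmatrix},\quad A_2(E)=\begin{bmatrix}E&-1\\1&0\end{bmatrix}\begin{bmatrix}E-\lambda_1-c_1&-1\\1&0\end{bmatrix},$$ $$A_3(E)=\begin{bmatrix}E-\lambda_0&-1\\1&0\end{bmatrix}\begin{bmatrix}E-c_1&-1\\1&0\end{bmatrix},\quad A_4(E)=\begin{bmatrix}E-\lambda_0&-1\\1&0\end{bmatrix}\begin{bmatrix}E-\lambda_1-c_1&-1\\1&0\end{bmatrix}.$$ Then the set $\{E\in\mathbb{R}: A_i(E)\text{ is hyperbolic for every } i=1,2,3,4\}=\bigcap_{i=1}^4\{E:|\operatorname{tr}A_i(E)|>2\}$ is a union of at most $5$ intervals.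
   Context: A matrix in $SL(2,\mathbb{R})$ is hyperbolic if the absolute value of its trace is greater than $2$. *)

(* Defs.v *)
From HB Require Import structures.
From mathcomp Require Import all_boot all_order all_algebra.
From mathcomp Require Import reals.
Set Implicit Arguments. Unset Strict Implicit. Unset Printing Implicit Defensive.
Import Order.TTheory GRing.Theory Num.Theory.
Local Open Scope ring_scope.

Definition tmat (R : realType) (x : R) : 'M[R]_2 :=
  \matrix_(i < 2, j < 2)
    (if i == 0 :> 'I_2 then (if j == 0 :> 'I_2 then x else -1)
     else (if j == 0 :> 'I_2 then 1 else 0)).

Definition hyperbolic (R : realType) (A : 'M[R]_2) : Prop := 2 < `|\tr A|.

Definition A1 (R : realType) (l0 l1 c1 E : R) : 'M[R]_2 := tmat E *m tmat (E - c1).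
Definition A2 (R : realType) (l0 l1 c1 E : R) : 'M[R]_2 := tmat E *m tmat (E - l1 - c1).
Definition A3 (R : realType) (l0 l1 c1 E : R) : 'M[R]_2 := tmat (E - l0) *m tmat (E - c1).
Definition A4 (R : realType) (l0 l1 c1 E : R) : 'M[R]_2 := tmat (E - l0) *m tmat (E - l1 - c1).

(* Main.v *)
Require Import Defs.
From HB Require Import structures.
From mathcomp Require Import all_boot all_order all_algebra.
From mathcomp Require Import reals.
From mathcomp Require Import ring lra.
Import Order.TTheory GRing.Theory Num.Theory.
Local Open Scope ring_scope.

Section Aux.
Context {R : realType}.
Implicit Types x y a b E : R.

Definition sq x y : R := Num.sqrt ((x - y) ^+ 2 + 16).
Definition rmm x y : R := (x + y - sq x y) / 2.
Definition rpp x y : R := (x + y + sq x y) / 2.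

Lemma sq_ge0 x y : 0 <= sq x y.
Proof. exact: sqrtr_ge0. Qed.

Lemma sq_sqr x y : sq x y ^+ 2 = (x - y) ^+ 2 + 16.
Proof. rewrite /sq sqr_sqrtr //; apply: addr_ge0 => //; exact: sqr_ge0. Qed.

Lemma sq_gt x y : x - y < sq x y /\ y - x < sq x y.
Proof.
have h1 := sq_ge0 x y; have h2 := sq_sqr x y.
rewrite expr2 in h2; split; nra.
Qed.

Lemma r_bounds x y :
  rmm x y < x /\ rmm x y < y /\ x < rpp x y /\ y < rpp x y.
Proof. have [h1 h2] := sq_gt x y; rewrite /rmm /rpp; lra. Qed.

Lemma trace_tt a b : \tr (tmat a *m tmat b) = a * b - 2.
Proof.
rewrite /mxtrace !big_ord_recr big_ord0 /= !mxE !big_ord_recr big_ord0 /= !mxE /=.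
rewrite big_ord0; lra.
Qed.

Lemma Q4 x y E : 4 < (E - x) * (E - y) <-> E < rmm x y \/ rpp x y < E.
Proof.
have h1 := sq_ge0 x y; have h2 := sq_sqr x y; have [h3 h4] := sq_gt x y.
rewrite expr2 in h2; rewrite /rmm /rpp; split; [move=> h|move=> [h|h]]; nra.
Qed.

Lemma Qrm x y : (rmm x y - x) * (rmm x y - y) = 4.
Proof.
have h2 := sq_sqr x y.
rewrite /rmm.
have -> : ((x + y - sq x y) / 2 - x) * ((x + y - sq x y) / 2 - y)
   = (sq x y ^+ 2 - (x - y) ^+ 2) / 4 by field.
by by rewrite h2; field.
Qed.

Lemma Qrp x y : (rpp x y - x) * (rpp x y - y) = 4.
Proof.
have h2 := sq_sqr x y.
rewrite /rpp.
have -> : ((x + y + sq x y) / 2 - x) * ((x + y + sq x y) / 2 - y)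
   = (sq x y ^+ 2 - (x - y) ^+ 2) / 4 by field.
by rewrite h2; field.
Qed.

Lemma neg_prod x y E : (E - x) * (E - y) < 0 <-> (x < E /\ E < y) \/ (y < E /\ E < x).
Proof.
split; [move=> h|move=> [[h h']|[h h']]]; last 2 first; [nra|nra|].
case: (ltgtP E x) => ex; case: (ltgtP E y) => ey; try lra; try nra;
  move: h; rewrite ?ey ?ex subrr ?mulr0 ?mul0r ltxx.
Qed.

Lemma rm_mono x y x' y' : x <= x' -> y <= y' -> rmm x y <= rmm x' y'.
Proof.
move=> hx hy.
have [b1 [b2 [b3 b4]]] := r_bounds x y.
have [c1 [c2 [c3 c4]]] := r_bounds x' y'.
have q := Qrm x' y'.
set e := rmm x' y' in q c1 c2 c3 c4 *.
case: (leP (rmm x y) e) => // he.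
have : 4 < (e - x) * (e - y) by apply/Q4; left.
nra.
Qed.

Lemma rp_mono x y x' y' : x <= x' -> y <= y' -> rpp x y <= rpp x' y'.
Proof.
move=> hx hy.
have [b1 [b2 [b3 b4]]] := r_bounds x y.
have [c1 [c2 [c3 c4]]] := r_bounds x' y'.
have q := Qrp x y.
set e := rpp x y in q b1 b2 b3 b4 *.
case: (leP e (rpp x' y')) => // he.
have : 4 < (e - x') * (e - y') by apply/Q4; right.
nra.
Qed.

Definition Lin x y E : Prop :=
  (x < E /\ E < y) \/ (y < E /\ E < x) \/ E < rmm x y \/ rpp x y < E.

Lemma hyp_lin x y E :
  hyperbolic (tmat (E - x) *m tmat (E - y)) <-> Lin x y E.
Proof.
rewrite /hyperbolic trace_tt /Lin.
have h1 := Q4 x y E; have h2 := neg_prod x y E.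
rewrite ltr_normr.
set p := (E - x) * (E - y) in h1 h2 *.
split.
- move=> /orP [h|h].
  + have : 4 < p by lra. move/h1 => [] ?; tauto.
  + have : p < 0 by lra. move/h2 => [] ?; tauto.
- move=> H; apply/orP.
  have: p < 0 \/ 4 < p by tauto.
  case=> h; [right|left]; lra.
Qed.

End Aux.

Theorem proposition1 (R : realType) (l0 l1 c1 : R) :
  0 <= l0 -> 0 <= l1 -> 0 <= c1 ->
  exists s : seq (interval R),
    (size s <= 5)%N /\
    forall E : R,
      (hyperbolic (A1 l0 l1 c1 E) /\ hyperbolic (A2 l0 l1 c1 E) /\
       hyperbolic (A3 l0 l1 c1 E) /\ hyperbolic (A4 l0 l1 c1 E))
      <-> has (fun I : interval R => E \in I) s.
Proof.
move=> h0 h1 hc.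
set P := l1 + c1.
have hP : c1 <= P by rewrite /P; lra.
have eA : forall E, hyperbolic (A1 l0 l1 c1 E) /\ hyperbolic (A2 l0 l1 c1 E) /\
       hyperbolic (A3 l0 l1 c1 E) /\ hyperbolic (A4 l0 l1 c1 E) <->
       Lin 0 c1 E /\ Lin 0 P E /\ Lin l0 c1 E /\ Lin l0 P E.
  move=> E; rewrite /A1 /A2 /A3 /A4 -!hyp_lin subr0.
  by rewrite /P opprD addrA.
have [a1 [a2 [a3 a4]]] := r_bounds 0 c1.
have [b1 [b2 [b3 b4]]] := r_bounds 0 P.
have [d1 [d2 [d3 d4]]] := r_bounds l0 c1.
have [e1 [e2 [e3 e4]]] := r_bounds l0 P.
have m1 := rm_mono _ _ _ _ (lexx (0:R)) hP.
have m2 := rm_mono _ _ _ _ h0 (lexx c1).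
have m3 := rm_mono _ _ _ _ (lexx l0) hP.
have m4 := rm_mono _ _ _ _ h0 (lexx P).
have n1 := rp_mono _ _ _ _ (lexx (0:R)) hP.
have n2 := rp_mono _ _ _ _ h0 (lexx c1).
have n3 := rp_mono _ _ _ _ (lexx l0) hP.
have n4 := rp_mono _ _ _ _ h0 (lexx P).
set I1 := `]-oo, rmm 0 c1[.
set I2 := `]rpp l0 P, +oo[.
set I3 := `]l0, c1[.
set I4 := `]rpp 0 P, l0[.
set I5 := `]0, rmm l0 c1[.
set I6 := `]rpp l0 c1, P[.
set I7 := `]rpp 0 c1, rmm l0 P[.
case: (ltP l0 c1) => hl.
  exists [:: I1; I2; I3; I5; I6]; split => // E.
  rewrite eA /= !in_itv /= /Lin; lra.
case: (ltP l0 P) => hl'.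
  exists [:: I1; I2; I5; I6; I7]; split => // E.
  rewrite eA /= !in_itv /= /Lin; lra.
exists [:: I1; I2; I4; I5; I7]; split => // E.
rewrite eA /= !in_itv /= /Lin; lra.
Qed.
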